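(* Let $0<T<\infty$, $\Delta=(0,T]$, and let $F$ be a distribution on $[0,\infty)$ belonging to $\mathcal L_\Delta$. Assume there exist $c>0$ and $x_0<\infty$ such that $F(x+t+\Delta)\ge cF(x+\Delta)$ for all $t\in(0,x]$ and all $x>x_0$. Then $F\in\mathcal S_\Delta$.
   Context: $x+\Delta=(x,x+T]$. $F\in\mathcal L_\Delta$ means $F(x+\Delta)>0$ for all large $x$ and $F(x+t+\Delta)/F(x+\Delta)\to1$ as $x\to\infty$ uniformly in $t\in[0,1]$. A distribution $F$ on $[0,\infty)$ with unbounded support is in $\mathcal S_\Delta$ if $F\in\mathcal L_\Delta$ and $(F*F)(x+\Delta)\sim2F(x+\Delta)$ as $x\to\infty$. *)

(* Defs.v *)
From Stdlib Require Import Reals Lra ClassicalEpsilon.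
Open Scope R_scope.

(** A distribution on [0,oo) is represented by its distribution function
    G x = F([0,x]) (equivalently F((-oo,x])). *)
Definition is_distr0 (G : R -> R) : Prop :=
  (forall x y, x <= y -> G x <= G y) /\
  (forall x eps, 0 < eps -> exists d, 0 < d /\ forall y, x <= y < x + d -> Rabs (G y - G x) < eps) /\
  (forall x, x < 0 -> G x = 0) /\
  (forall eps, 0 < eps -> exists M, forall x, M <= x -> Rabs (G x - 1) < eps).

Definition Fint (G : R -> R) (T x : R) : R := G (x + T) - G x.

(** Classical limit of a real sequence (meaningful when it converges). *)
Definition lim_seq (u : nat -> R) : R :=
  epsilon (inhabits 0) (fun l => Un_cv u l).

(** Left-tagged Lebesgue-Stieltjes sums of  u |-> G (y - u)  against dG on
    the uniform partition of [-1, y+1] into n+1 cells. Since u |-> G(y-u) is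
    bounded, nonincreasing and left-continuous, these sums converge
    (dominated convergence) to  \int G(y-u) dG(u) = (F*F)([0,y]). *)
Definition conv_sum (G : R -> R) (y : R) (n : nat) : R :=
  let h := (y + 2) / INR (S n) in
  sum_f_R0 (fun k => G (y - (-1 + INR k * h)) *
                     (G (-1 + INR (S k) * h) - G (-1 + INR k * h))) n.

Definition conv_cdf (G : R -> R) (y : R) : R := lim_seq (conv_sum G y).

Definition ConvInt (G : R -> R) (T x : R) : R :=
  conv_cdf G (x + T) - conv_cdf G x.

Definition in_L_Delta (T : R) (G : R -> R) : Prop :=
  (exists x1, forall x, x1 <= x -> 0 < Fint G T x) /\
  (forall eps, 0 < eps -> exists M, forall x t, M <= x -> 0 <= t <= 1 ->
      Rabs (Fint G T (x + t) / Fint G T x - 1) < eps).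

Definition in_S_Delta (T : R) (G : R -> R) : Prop :=
  (forall M, G M < 1) /\
  in_L_Delta T G /\
  (forall eps, 0 < eps -> exists M, forall x, M <= x ->
      Rabs (ConvInt G T x / Fint G T x - 2) < eps).

(* Main.v *)
Require Import Defs.
From Stdlib Require Import Reals Lra Lia ClassicalEpsilon.
Open Scope R_scope.

Lemma Fint_ge0 (G : R -> R) T x :
  (forall x y, x <= y -> G x <= G y) -> 0 <= T -> 0 <= Fint G T x.
Proof. intros mono T0; unfold Fint; pose proof (mono x (x + T)); lra. Qed.

Lemma G_le1 (G : R -> R) : is_distr0 G -> forall x, G x <= 1.
Proof.
intros [mono [_ [_ lim]]] x.
destruct (Rle_dec (G x) 1) as [h|h]; [exact h|].
destruct (lim (G x - 1)) as [M HM]; [lra|].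
pose proof (HM (Rmax M x) (Rmax_l M x)) as H1.
pose proof (mono x (Rmax M x) (Rmax_r M x)) as H2.
apply Rabs_def2 in H1; lra.
Qed.

Lemma G_ge0 (G : R -> R) : is_distr0 G -> forall x, 0 <= G x.
Proof.
intros [mono [_ [neg _]]] x.
pose proof (mono (Rmin x (-1)) x (Rmin_l x (-1))) as H.
rewrite (neg (Rmin x (-1))) in H; [lra|].
pose proof (Rmin_r x (-1)); lra.
Qed.

Lemma bern (e : R) (N : nat) : 0 <= e <= 1 -> 1 - INR N * e <= (1 - e) ^ N.
Proof.
intros He; induction N as [|N IH]; [simpl; lra|].
rewrite S_INR; simpl.
assert (0 <= INR N) by apply pos_INR.
assert (0 <= (1 - e) ^ N) by (apply pow_le; lra).
nra.
Qed.

Lemma pow_le1 (e : R) (N : nat) : 0 <= e <= 1 -> (1 - e) ^ N <= 1.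
Proof.
intros He; induction N as [|N IH]; simpl; [lra|].
assert (0 <= (1 - e) ^ N) by (apply pow_le; lra).
nra.
Qed.

Lemma ratio_bounds (a F e : R) : 0 < F -> Rabs (a / F - 1) < e ->
  (1 - e) * F < a /\ a < (1 + e) * F.
Proof.
intros F0 H; apply Rabs_def2 in H; destruct H as [h1 h2].
assert (E : a = (a / F) * F) by (field; lra).
split; rewrite E; nra.
Qed.

Lemma back (G : R -> R) T (e M : R) :
  (forall x y, x <= y -> G x <= G y) -> 0 <= T -> 0 <= e <= 1 ->
  (forall x t, M <= x -> 0 <= t <= 1 -> Rabs (Fint G T (x + t) / Fint G T x - 1) < e) ->
  (forall x, M <= x -> 0 < Fint G T x) ->
  forall j : nat, forall x s, M + INR j <= x -> 0 <= s <= INR j ->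
    (1 - e) ^ j * Fint G T x <= Fint G T (x - s) /\
    (1 - e) ^ j * Fint G T (x - s) <= Fint G T x.
Proof.
intros mono T0 He HL Hpos j; induction j as [|j IH]; intros x s Hx Hs.
- simpl in Hs |- *. replace s with 0 by lra. replace (x - 0) with x by ring. lra.
- rewrite S_INR in Hx, Hs.
  assert (Hj : 0 <= INR j) by apply pos_INR.
  assert (Pj : 0 <= (1 - e) ^ j) by (apply pow_le; lra).
  assert (Fx0 : 0 <= Fint G T x) by (apply Fint_ge0; auto).
  assert (Fs0 : 0 <= Fint G T (x - s)) by (apply Fint_ge0; auto).
  simpl.
  destruct (Rle_dec s (INR j)) as [hs|hs].
  + destruct (IH x s) as [h1 h2]; [lra|lra|].
    split; nra.
  + set (y := x - s).
    assert (Hy : M <= y) by (unfold y; lra).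
    assert (Fy : 0 < Fint G T y) by (apply Hpos; exact Hy).
    pose proof (HL y (s - INR j) Hy) as Hr.
    replace (y + (s - INR j)) with (x - INR j) in Hr by (unfold y; ring).
    assert (Hr' : 0 <= s - INR j <= 1) by lra.
    specialize (Hr Hr').
    destruct (ratio_bounds _ _ _ Fy Hr) as [q2 q1].
    destruct (IH x (INR j)) as [h1 h2]; [lra|lra|].
    fold y.
    split.
    * assert (0 <= 1 - e) by lra.
      assert ((1 - e) * Fint G T (x - INR j) <= Fint G T y) by nra.
      nra.
    * nra.
Qed.

Lemma shift (G : R -> R) T :
  (forall x y, x <= y -> G x <= G y) -> 0 <= T -> in_L_Delta T G ->
  forall K d, 0 <= K -> 0 < d <= 1 ->
  exists M, forall x, M <= x -> forall a, -1 < a <= K ->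
    (1 - d) * Fint G T x <= Fint G T (x - a) <= (1 + d) * Fint G T x.
Proof.
intros mono T0 [[x1 Hpos] HL] K d K0 Hd.
destruct (INR_unbounded K) as [N HN].
assert (HN0 : 0 <= INR N) by apply pos_INR.
set (eta := d / (2 * (INR N + 1))).
assert (Heta : eta * (2 * (INR N + 1)) = d) by (unfold eta; field; lra).
assert (eta0 : 0 < eta) by (unfold eta; apply Rdiv_lt_0_compat; lra).
assert (eta1 : eta <= d / 2) by nra.
destruct (HL eta eta0) as [M0 HM0].
set (Mb := Rmax M0 x1).
assert (HL' : forall x t, Mb <= x -> 0 <= t <= 1 ->
   Rabs (Fint G T (x + t) / Fint G T x - 1) < eta).
{ intros x t hx ht; apply HM0; [unfold Mb in hx; pose proof (Rmax_l M0 x1); lra|exact ht]. }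
assert (Hpos' : forall x, Mb <= x -> 0 < Fint G T x).
{ intros x hx; apply Hpos; unfold Mb in hx; pose proof (Rmax_r M0 x1); lra. }
exists (Mb + INR N + 1).
intros x Hx a Ha.
assert (Fx : 0 < Fint G T x) by (apply Hpos'; lra).
destruct (Rle_dec a 0) as [ha|ha].
- assert (Hr := HL' x (- a)).
  replace (x + - a) with (x - a) in Hr by ring.
  destruct (ratio_bounds _ _ _ Fx (Hr ltac:(lra) ltac:(lra))) as [r1 r2].
  split; nra.
- destruct (back G T eta Mb mono T0 ltac:(lra) HL' Hpos' N x a ltac:(lra) ltac:(lra)) as [b1 b2].
  assert (Bn := bern eta N ltac:(lra)).
  assert (Bn' : 1 - d / 2 <= (1 - eta) ^ N) by nra.
  assert (Fa : 0 <= Fint G T (x - a)) by (apply Fint_ge0; auto).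
  split; nra.
Qed.

Lemma asym (T : R) (G Lf : R -> R) :
  0 < T -> is_distr0 G -> in_L_Delta T G ->
  (exists c x0, 0 < c /\
     forall x t, x0 < x -> 0 < t <= x -> Fint G T (x + t) >= c * Fint G T x) ->
  (forall x K lo hi1 hi2, 0 <= x -> 0 <= K <= x / 2 -> 0 <= lo -> 0 <= hi1 -> 0 <= hi2 ->
     (forall a, -1 < a <= K -> lo <= Fint G T (x - a) <= hi1) ->
     (forall a, K < a <= x / 2 -> Fint G T (x - a) <= hi2) ->
     2 * lo * G K <= Lf (x + T) - Lf x <=
       2 * (hi1 * G K + hi2 * (G (x / 2) - G K)) + Fint G T (x / 2) ^ 2) ->
  forall eps, 0 < eps -> exists M, forall x, M <= x ->
      Rabs ((Lf (x + T) - Lf x) / Fint G T x - 2) < eps.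
Proof.
intros T0 HG HL [c [x0 [c0 Hc]]] Hb eps eps0.
assert (HG' := HG); destruct HG' as [mono [_ [_ lim]]].
assert (G1 := G_le1 G HG). assert (G0 := G_ge0 G HG).
set (d := Rmin (1/2) (Rmin (eps/8) (eps*c/8))).
assert (d0 : 0 < d).
{ unfold d; repeat apply Rmin_pos; try lra; nra. }
assert (d1 : d <= 1/2) by apply Rmin_l.
assert (d2 : d <= eps / 8) by (unfold d; eapply Rle_trans; [apply Rmin_r|apply Rmin_l]).
assert (d3 : d <= eps * c / 8) by (unfold d; eapply Rle_trans; [apply Rmin_r|apply Rmin_r]).
destruct (lim d d0) as [M1 HM1].
set (K := Rmax M1 0).
assert (K0 : 0 <= K) by apply Rmax_r.
assert (GK : 1 - d < G K).
{ pose proof (HM1 K (Rmax_l M1 0)) as h; apply Rabs_def2 in h; lra. }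
destruct (shift G T mono ltac:(lra) HL K d K0 ltac:(lra)) as [M2 HM2].
destruct HL as [[x1 Hpos] _].
set (M := Rmax M2 (Rmax x1 (Rmax (2 * K) (Rmax (2 * (Rabs x0 + 1)) (2 * M1))))).
exists M; intros x Hx.
assert (hM2 : M2 <= x) by (unfold M in Hx; pose proof (Rmax_l M2 (Rmax x1 (Rmax (2 * K) (Rmax (2 * (Rabs x0 + 1)) (2 * M1))))); lra).
assert (R1 := Rmax_r M2 (Rmax x1 (Rmax (2 * K) (Rmax (2 * (Rabs x0 + 1)) (2 * M1))))).
assert (R2 := Rmax_l x1 (Rmax (2 * K) (Rmax (2 * (Rabs x0 + 1)) (2 * M1)))).
assert (R3 := Rmax_r x1 (Rmax (2 * K) (Rmax (2 * (Rabs x0 + 1)) (2 * M1)))).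
assert (R4 := Rmax_l (2 * K) (Rmax (2 * (Rabs x0 + 1)) (2 * M1))).
assert (R5 := Rmax_r (2 * K) (Rmax (2 * (Rabs x0 + 1)) (2 * M1))).
assert (R6 := Rmax_l (2 * (Rabs x0 + 1)) (2 * M1)).
assert (R7 := Rmax_r (2 * (Rabs x0 + 1)) (2 * M1)).
assert (A0 := Rle_abs x0). assert (A1 := Rabs_pos x0).
fold M in R1.
assert (hx1 : x1 <= x) by lra.
assert (hK : K <= x / 2) by lra.
assert (hx0 : x0 < x / 2) by lra.
assert (hxp : 0 < x / 2) by lra.
assert (hM1 : M1 <= x / 2) by lra.
set (Fx := Fint G T x).
assert (Fx0 : 0 < Fx) by (apply Hpos; lra).
set (F2 := Fint G T (x / 2)).
assert (F2a : F2 <= Fx / c).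
{ assert (h := Hc (x / 2) (x / 2) hx0 ltac:(lra)).
  replace (x / 2 + x / 2) with x in h by field.
  fold Fx F2 in h. apply Rge_le in h.
  apply (Rmult_le_reg_l c); [lra|]. unfold Rdiv. rewrite <- Rmult_assoc, (Rmult_comm c Fx), Rmult_assoc, Rinv_r by lra. lra. }
assert (F2b : F2 <= d).
{ unfold F2, Fint. pose proof (HM1 (x / 2) hM1) as h. apply Rabs_def2 in h.
  pose proof (G1 (x / 2 + T)). lra. }
assert (F20 : 0 <= F2) by (apply Fint_ge0; auto; lra).
assert (F2sq : F2 ^ 2 <= d * (Fx / c)).
{ simpl. rewrite Rmult_1_r. apply Rmult_le_compat; lra. }
assert (Fxc : 0 <= Fx / c) by (unfold Rdiv; apply Rmult_le_pos; [lra|left; apply Rinv_0_lt_compat; lra]).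
destruct (Hb x K ((1 - d) * Fx) ((1 + d) * Fx) (Fx / c) ltac:(lra) ltac:(lra)
  ltac:(nra) ltac:(nra) Fxc) as [lo up].
- intros a Ha. apply (HM2 x hM2 a Ha).
- intros a Ha.
  assert (h := Hc (x - a) a ltac:(lra) ltac:(lra)).
  replace (x - a + a) with x in h by ring. fold Fx in h. apply Rge_le in h.
  apply (Rmult_le_reg_l c); [lra|]. unfold Rdiv. rewrite <- Rmult_assoc, (Rmult_comm c Fx), Rmult_assoc, Rinv_r by lra. lra.
- fold F2 in up.
  set (D := Lf (x + T) - Lf x) in *.
  assert (GKx : 0 <= G (x / 2) - G K <= d).
  { split; [pose proof (mono K (x / 2) hK); lra|].
    pose proof (G1 (x / 2)); lra. }
  assert (t1 : (Fx / c) * (G (x / 2) - G K) <= (Fx / c) * d) by (apply Rmult_le_compat_l; lra).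
  assert (t2 : (1 + d) * Fx * G K <= (1 + d) * Fx).
  { rewrite <- (Rmult_1_r ((1 + d) * Fx)) at 2. apply Rmult_le_compat_l; [nra|apply G1]. }
  assert (t3 : (1 - d) * Fx * (1 - d) <= (1 - d) * Fx * G K) by (apply Rmult_le_compat_l; nra).
  assert (Dlo : 2 * (1 - d) * (1 - d) * Fx <= D) by nra.
  assert (Dup : D <= 2 * (1 + d) * Fx + 3 * d * (Fx / c)) by nra.
  assert (E1 : D / Fx - 2 = (D - 2 * Fx) / Fx) by (field; lra).
  rewrite E1.
  assert (cd : d / c <= eps / 8) by (apply (Rmult_le_reg_l c); [lra|]; field_simplify; lra).
  assert (Dup' : D - 2 * Fx <= (2 * d + 3 * (d / c)) * Fx).
  { replace (3 * d * (Fx / c)) with (3 * (d / c) * Fx) in Dup by (field; lra). nra. }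
  apply Rabs_def1.
  + apply (Rmult_lt_reg_r Fx); [lra|]. unfold Rdiv. rewrite Rmult_assoc, Rinv_l by lra. nra.
  + apply (Rmult_lt_reg_r Fx); [lra|]. unfold Rdiv. rewrite Rmult_assoc, Rinv_l by lra. nra.
Qed.

From HB Require Import structures.
From mathcomp Require Import all_boot all_order all_algebra.
From mathcomp Require Import all_classical all_reals all_analysis.
From mathcomp Require Import measurable_realfun.
From mathcomp Require Import lra ring.
From mathcomp Require Import Rstruct Rstruct_topology.
Set Implicit Arguments.
Unset Strict Implicit.
Unset Printing Implicit Defensive.
Import Order.TTheory GRing.Theory Num.Theory.
Import numFieldNormedType.Exports.
Import numFieldTopology.Exports.
HB.instance Definition _ := Order_isNbhs.Build _ R (@real_order_nbhsE R).
HB.instance Definition _ := Pointed.on R.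
HB.instance Definition _ := PseudoMetricNormedZmod.copy R R^o.
HB.instance Definition RisM : isMeasurable default_measure_display R := @isMeasurable.Build _ (measurableTypeR R) (@measurableR R)
    measurable0 (@measurableC _ _) (@bigcupT_measurable _ _).
Local Open Scope classical_set_scope.
Local Close Scope R_scope.
Local Open Scope ring_scope.
Bind Scope ring_scope with R.


Lemma IZRm1 : IZR (Zneg xH) = -1 :> R.
Proof. by rewrite /IZR /IPR. Qed.
Lemma IZR2 : IZR (Zpos (xO xH)) = 2 :> R.
Proof. by rewrite IZRposE INRE. Qed.
Lemma sum_f_R0_big (f : nat -> R) n : sum_f_R0 f n = \sum_(k < n.+1) f k.
Proof.
elim: n => [|n IH]; first by rewrite big_ord_recr big_ord0 /= add0r.
by rewrite /= IH [in RHS]big_ord_recr.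
Qed.

Section Core.
Variable G : R -> R.
Hypothesis Gnd : nondecreasing G.
Hypothesis Grc : right_continuous G.
Hypothesis Gneg : forall x, x < 0 -> G x = 0.

#[local] HB.instance Definition _ := isCumulative.Build R _ R G Gnd Grc.

Local Notation mu := (lebesgue_stieltjes_measure G).
Local Notation pi := (mu \x mu)%E.

Lemma mu_oc (a b : R) : a <= b -> mu `]a, b] = (G b - G a)%:E.
Proof.
move=> ab; rewrite /lebesgue_stieltjes_measure /measure_extension/=.
rewrite measurable_mu_extE/=; last exact: is_ocitv.
by rewrite wlength_itv_bnd.
Qed.

Lemma pi_rect (A B : set (measurableTypeR R)) : measurable A -> measurable B ->
  pi (A `*` B) = (mu A * mu B)%E.
Proof. by move=> mA mB; rewrite product_measure1E. Qed.

Lemma pi_ysec (X : set (measurableTypeR R * measurableTypeR R)) : measurable X ->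
  pi X = (\int[mu]_y mu (ysection X y))%E.
Proof.
move=> mX; rewrite (product_measure_unique (m' := (mu \x^ mu)%E)) //.
by move=> A B mA mB; apply: product_measure2E.
Qed.



Definition T2 := (measurableTypeR R * measurableTypeR R)%type.

Definition S3 (A B C : set R) : set T2 :=
  [set p | A p.1 /\ B p.2 /\ C (p.1 + p.2)].

Lemma measurable_add2 : measurable_fun setT (fun p : T2 => (p.1 + p.2 : R)).
Proof.
apply: measurable_funD.
exact: measurable_fst.
exact: measurable_snd.
Qed.

Lemma measurable_S3 A B C : measurable A -> measurable B -> measurable C ->
  measurable (S3 A B C).
Proof.
move=> mA mB mC.
have -> : S3 A B C = (fst @^-1` A) `&` (snd @^-1` B) `&` ((fun p : T2 => (p.1 + p.2 : R)) @^-1` C).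
  by apply/seteqP; split => p /=; rewrite /S3 /preimage /=; tauto.
apply: measurableI; [apply: measurableI|].
- by rewrite -[X in measurable X]setTI; apply: measurable_fst.
- by rewrite -[X in measurable X]setTI; apply: measurable_snd.
- by rewrite -[X in measurable X]setTI; apply: measurable_add2.
Qed.


Definition oc (a b : R) : set R := [set x | a < x /\ x <= b].
Arguments oc (a b)%ring_scope.

Lemma ocE a b : oc a b = `]a, b]%classic.
Proof.
apply/seteqP; split => x /=; rewrite /oc /= in_itv /=.
  by move=> [-> ->].
by move=> /andP[-> ->].
Qed.

Lemma measurable_oc a b : measurable (oc a b).
Proof. by rewrite ocE; exact: measurable_itv. Qed.

Lemma mu_oc' a b : a <= b -> mu (oc a b) = (G b - G a)%:E.
Proof. by rewrite ocE; exact: mu_oc. Qed.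

Lemma split_sum (A : set T2) (t : nat -> R) : measurable A ->
  (forall k, t k <= t k.+1) ->
  forall m, pi (A `&` (setT `*` oc (t 0%N) (t m))) =
    (\sum_(k < m) pi (A `&` (setT `*` oc (t k) (t k.+1))))%E.
Proof.
move=> mA tnd.
have t0m : forall m, t 0%N <= t m.
  elim=> [|m IH]; first by [].
  exact: le_trans IH (tnd m).
elim=> [|m IH].
  rewrite big_ord0.
  have -> : A `&` (setT `*` oc (t 0%N) (t 0%N)) = set0.
    apply/seteqP; split => [[x y] /= [_ [_ [h1 h2]]]|//].
    by lra.
  exact: measure0.
rewrite big_ord_recr /= -IH.
have -> : A `&` (setT `*` oc (t 0%N) (t m.+1)) =
    (A `&` (setT `*` oc (t 0%N) (t m))) `|` (A `&` (setT `*` oc (t m) (t m.+1))).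
  apply/seteqP; split => [[x y] /= [Ax [_ [h1 h2]]]|[x y] /= [[Ax [_ [h1 h2]]]|[Ax [_ [h1 h2]]]]].
  - have [hy|hy] := leP y (t m).
      by left.
    by right.
  - clear IH; have := tnd m; move=> H; split => //; split => //; rewrite /oc /=; lra.
  - clear IH; have := t0m m; move=> H; split => //; split => //; rewrite /oc /=; lra.
apply: measureU.
- by apply: measurableI => //; apply: measurableX => //; exact: measurable_oc.
- by apply: measurableI => //; apply: measurableX => //; exact: measurable_oc.
- apply/seteqP; split => [[x y] /= [[_ [_ [h1 h2]]] [_ [_ [h3 h4]]]]|//].
  by clear IH; lra.
Qed.


Lemma measurable_gt (a : R) : measurable [set x : R | a < x].
Proof.
have -> : [set x : R | a < x] = `]a, +oo[%classic.
  by apply/seteqP; split => x /=; rewrite in_itv /= andbT.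
exact: measurable_itv.
Qed.

Lemma measurable_le (b : R) : measurable [set x : R | x <= b].
Proof.
have -> : [set x : R | x <= b] = `]-oo, b]%classic.
  by apply/seteqP; split => x /=; rewrite in_itv /=.
exact: measurable_itv.
Qed.

Definition Z (y : R) : set T2 :=
  S3 [set a | -1 < a] [set b | -1 < b] [set s | s <= y].
Arguments Z y%ring_scope.

Lemma measurable_Z y : measurable (Z y).
Proof.
by apply: measurable_S3; [exact: measurable_gt|exact: measurable_gt|exact: measurable_le].
Qed.

Lemma Zlow (y : R) (t : nat -> R) (m : nat) :
  (forall k, t k <= t k.+1) -> t 0%N = -1 -> y + 1 <= t m ->
  (pi (Z y) <= \sum_(k < m) mu (oc (-1) (y - t k)) * mu (oc (t k) (t k.+1)))%E.
Proof.
move=> tnd t0 tm.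
have -> : Z y = Z y `&` (setT `*` oc (t 0%N) (t m)).
  apply/seteqP; split => [[a b] /= [h1 [h2 h3]]|[a b] [] //].
  split => //; split => //; rewrite /oc /= t0; split => //.
  by rewrite /= in h1 h2 h3; lra.
rewrite split_sum //; last exact: measurable_Z.
apply: lee_sum => k _.
rewrite -pi_rect; [|exact: measurable_oc|exact: measurable_oc].
apply: le_measure; rewrite ?inE.
- by apply: measurableI; [exact: measurable_Z|apply: measurableX => //; exact: measurable_oc].
- by apply: measurableX; exact: measurable_oc.
move=> [a b] /= [[h1 [h2 h3]] [_ [h4 h5]]]; split; rewrite /oc /=; split => //.
by rewrite /= in h1 h2 h3; lra.
Qed.

Lemma Zup (y h : R) (t : nat -> R) (m : nat) :
  (forall k, t k <= t k.+1) -> (forall k, t k.+1 <= t k + h) -> -1 <= t 0%N ->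
  (\sum_(k < m) mu (oc (-1) (y - t k)) * mu (oc (t k) (t k.+1)) <= pi (Z (y + h)))%E.
Proof.
move=> tnd th t0.
have t0m : forall k, t 0%N <= t k.
  elim=> [|k IH]; first by [].
  exact: le_trans IH (tnd k).
apply: (@le_trans _ _ (pi (Z (y + h) `&` (setT `*` oc (t 0%N) (t m))))); last first.
  apply: le_measure; rewrite ?inE.
  - by apply: measurableI; [exact: measurable_Z|apply: measurableX => //; exact: measurable_oc].
  - exact: measurable_Z.
  by move=> p [].
rewrite split_sum //; last exact: measurable_Z.
apply: lee_sum => k _.
rewrite -pi_rect; [|exact: measurable_oc|exact: measurable_oc].
apply: le_measure; rewrite ?inE.
- by apply: measurableX; exact: measurable_oc.
- by apply: measurableI; [exact: measurable_Z|apply: measurableX => //; exact: measurable_oc].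
move=> [a b] /= [[h1 h2] [h3 h4]]; split; last by split.
have := t0m k; have := th k => H1 H2.
split; first by [].
rewrite /=; split; lra.

Qed.


Definition hh (y : R) (n : nat) : R := (y + 2) / n.+1%:R.
Definition tt (y : R) (n k : nat) : R := -1 + k%:R * hh y n.
Definition csum (y : R) (n : nat) : R :=
  \sum_(k < n.+1) G (y - tt y n k) * (G (tt y n k.+1) - G (tt y n k)).

Lemma hh_ge0 y n : 0 <= y -> 0 <= hh y n.
Proof. move=> y0; rewrite /hh divr_ge0 ?ler0n //; lra. Qed.

Lemma tt_S y n k : tt y n k.+1 = tt y n k + hh y n.
Proof. rewrite /tt -addn1 natrD; ring. Qed.

Lemma tt_0 y n : tt y n 0%N = -1.
Proof. by rewrite /tt mul0r addr0. Qed.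

Lemma tt_last y n : tt y n n.+1 = y + 1.
Proof.
rewrite /tt /hh mulrC -mulrA mulVf ?mulr1; first lra.
by rewrite pnatr_eq0.
Qed.

Lemma tt_le y n k : 0 <= y -> (k <= n.+1)%N -> tt y n k <= y + 1.
Proof.
move=> y0 kn; rewrite -(tt_last y n) /tt lerD2l ler_wpM2r ?hh_ge0 //.
by rewrite ler_nat.
Qed.

Lemma csum_bounds y n : 0 <= y ->
  (pi (Z y) <= (csum y n)%:E)%E /\ ((csum y n)%:E <= pi (Z (y + hh y n)))%E.
Proof.
move=> y0.
have E : (csum y n)%:E =
    (\sum_(k < n.+1) mu (oc (-1) (y - tt y n k)) * mu (oc (tt y n k) (tt y n k.+1)))%E.
  rewrite /csum -sumEFin; apply: eq_bigr => k _.
  have hk := @tt_le y n k y0 (ltnW (ltn_ord k)).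
  rewrite mu_oc'; last by lra.
  rewrite mu_oc'; last by rewrite tt_S; have := @hh_ge0 y n y0; lra.
  by rewrite (Gneg (x := -1)) ?subr0 //; lra.
rewrite E; split.
- apply: Zlow.
  + by move=> k; rewrite tt_S; have := @hh_ge0 y n y0; lra.
  + exact: tt_0.
  + by rewrite tt_last.
- apply: Zup.
  + by move=> k; rewrite tt_S; have := @hh_ge0 y n y0; lra.
  + by move=> k; rewrite tt_S.
  + by rewrite tt_0.
Qed.


Lemma piZ_fin w : pi (Z w) \is a fin_num.
Proof.
set c := `|w| + 1.
have c1 : -1 <= c by rewrite /c; have := normr_ge0 w; lra.
rewrite ge0_fin_numE ?measure_ge0 //.
apply: (@le_lt_trans _ _ (pi (oc (-1) c `*` oc (-1) c))).
  apply: le_measure; rewrite ?inE.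
  - exact: measurable_Z.
  - by apply: measurableX; exact: measurable_oc.
  move=> [a b] /= [h1 [h2 h3]]; rewrite /oc /=.
  have := ler_norm w; rewrite /c /= in h1 h2 h3 * => hw; split; split; lra.
rewrite pi_rect; [|exact: measurable_oc|exact: measurable_oc].
by rewrite mu_oc' // -EFinM ltry.
Qed.

Lemma hh_small y e : 0 <= y -> 0 < e -> exists N, forall n, (N <= n)%N -> hh y n < e.
Proof.
move=> y0 e0.
have q0 : 0 <= (y + 2) / e by rewrite divr_ge0 //; lra.
exists (Num.bound ((y + 2) / e)) => n Nn.
have H := archi_boundP q0.
have H2 : ((Num.bound ((y + 2) / e))%:R <= n.+1%:R :> R) by rewrite ler_nat; apply: leqW.
rewrite /hh ltr_pdivrMr ?ltr0n //.
rewrite ltr_pdivrMr // in H.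
by rewrite mulrC; apply: (lt_le_trans H); rewrite ler_pM2r.
Qed.

Lemma hh_nonincr y m n : 0 <= y -> (m <= n)%N -> hh y n <= hh y m.
Proof.
move=> y0 mn; rewrite /hh ler_wpM2l //; first lra.
by rewrite lef_pV2 ?posrE ?ltr0n // ler_nat.
Qed.

Lemma bigcapZ y : 0 <= y -> \bigcap_n Z (y + hh y n) = Z y.
Proof.
move=> y0; apply/seteqP; split => [[a b] H|[a b] /= [h1 [h2 h3]] n _]; last first.
  by split => //; split => //=; have := @hh_ge0 y n y0; rewrite /= in h3 *; lra.
have [h1 [h2 _]] := H 0%N I.
split => //; split => //=.
rewrite leNgt; apply/negP => hlt.
have e0 : 0 < a + b - y by rewrite subr_gt0.
have [N HN] := hh_small y0 e0.
have [_ [_ h3]] := H N I.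
have := HN N (leqnn N); rewrite /= in h3; lra.
Qed.


Lemma csum_cvg y : 0 <= y -> forall e, 0 < e ->
  exists N, forall n, (N <= n)%N -> `|csum y n - fine (pi (Z y))| < e.
Proof.
move=> y0 e e0.
set F := fun n => Z (y + hh y n).
have cv : (fun n => pi (F n)) @ \oo --> pi (Z y).
  rewrite -(bigcapZ y0).
  apply: (@nonincreasing_cvg_mu _ _ _ pi F).
  - by rewrite -ge0_fin_numE ?measure_ge0 ?piZ_fin.
  - by move=> i; exact: measurable_Z.
  - by rewrite (bigcapZ y0); exact: measurable_Z.
  - move=> m n mn; apply/subsetPset => -[a b] /= [h1 [h2 h3]]; split => //; split => //=.
    by have := hh_nonincr y0 mn; rewrite /= in h3 *; lra.
have finL := piZ_fin y.
rewrite -(fineK finL) in cv.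
have [_ cv'] := (fine_cvgP _ _).1 cv.
have := (cvgrPdist_lt _ _).1 cv' e e0.
case=> N _ HN; exists N => n Nn.
have {HN} HN := HN n Nn; rewrite /= in HN.
have [lo up] := csum_bounds n y0.
have finF := piZ_fin (y + hh y n).
rewrite -(fineK finL) lee_fin in lo.
rewrite -(fineK finF) lee_fin in up.
rewrite ger0_norm; last by rewrite subr_ge0.
have := ler_norm (fine (pi (F n)) - fine (pi (Z y))).
rewrite distrC in HN.
rewrite /F in HN *.
lra.
Qed.


Definition Wset (x T : R) : set T2 :=
  S3 [set a | -1 < a] [set b | -1 < b] (oc x (x + T)).
Definition E1 (x T : R) : set T2 :=
  S3 [set a | -1 < a] (oc (-1) (x / 2)) (oc x (x + T)).
Definition E2 (x T : R) : set T2 :=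
  S3 (oc (-1) (x / 2)) [set b | x / 2 < b] (oc x (x + T)).
Definition E3 (x T : R) : set T2 :=
  S3 [set a | x / 2 < a] [set b | x / 2 < b] (oc x (x + T)).

Lemma mW x T : measurable (Wset x T).
Proof. by apply: measurable_S3; [exact: measurable_gt|exact: measurable_gt|exact: measurable_oc]. Qed.
Lemma mE1 x T : measurable (E1 x T).
Proof. by apply: measurable_S3; [exact: measurable_gt|exact: measurable_oc|exact: measurable_oc]. Qed.
Lemma mE2 x T : measurable (E2 x T).
Proof. by apply: measurable_S3; [exact: measurable_oc|exact: measurable_gt|exact: measurable_oc]. Qed.
Lemma mE3 x T : measurable (E3 x T).
Proof. by apply: measurable_S3; [exact: measurable_gt|exact: measurable_gt|exact: measurable_oc]. Qed.

Lemma Zsplit x T : 0 <= T -> pi (Z (x + T)) = (pi (Z x) + pi (Wset x T))%E.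
Proof.
move=> T0.
have -> : Z (x + T) = Z x `|` Wset x T.
  apply/seteqP; rewrite /Z /Wset /S3 /oc /=; split => [[a b] /= [h1 [h2 h3]]|[a b] /= [[h1 [h2 h3]]|[h1 [h2 [h3 h4]]]]].
  - have [hs|hs] := leP (a + b) x; [left|right]; split => //; split => //.
  - by split => //; split => //; lra.
  - by split => //; split => //; lra.
apply: measureU; [exact: measurable_Z|exact: mW|].
apply/seteqP; rewrite /Z /Wset /E1 /E2 /E3 /S3 /=; split => [[a b] /= [[h1 [h2 h3]] [h4 [h5 [h6 h7]]]]|//].
by rewrite /= in h3; lra.
Qed.

Lemma Wsplit x T : 0 <= x -> pi (Wset x T) = (pi (E1 x T) + pi (E2 x T) + pi (E3 x T))%E.
Proof.
move=> x0.
have -> : Wset x T = (E1 x T `|` E2 x T) `|` E3 x T.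
  apply/seteqP; rewrite /Z /Wset /E1 /E2 /E3 /S3 /=; split => [[a b] /= [h1 [h2 h3]]|[a b] /= [[[h1 [h2 h3]]|[h1 [h2 h3]]]|[h1 [h2 h3]]]].
  - rewrite /= in h1 h2.
    have [hb|hb] := leP b (x / 2).
      by left; left; split => //; split => //; rewrite /oc /=; split.
    have [ha|ha] := leP a (x / 2).
      by left; right; split => //; rewrite /oc /=; split.
    by right; split.
  - by split => //; split => //; move: h2; rewrite /oc /=; case.
  - split; first by move: h1; rewrite /oc /=; case.
    by split => //=; rewrite /= in h2; move: h1; rewrite /oc /=; lra.
  - rewrite /= in h1 h2; split; first by lra.
    by split => //=; lra.
rewrite measureU; [|exact: measurableU (mE1 _ _) (mE2 _ _)|exact: mE3|].
- rewrite measureU //; [exact: mE1|exact: mE2|].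
  apply/seteqP; rewrite /Z /Wset /E1 /E2 /E3 /S3 /=; split => [[a b] /= [[h1 [h2 h3]] [h4 [h5 h6]]]|//].
  by move: h2; rewrite /oc /= in h5 *; lra.
- apply/seteqP; rewrite /Z /Wset /E1 /E2 /E3 /S3 /=; split => [[a b] /= [[[h1 [h2 h3]]|[h1 [h2 h3]]] [h4 [h5 h6]]]|//].
  + by move: h2; rewrite /oc /= in h5 *; lra.
  + by move: h1; rewrite /oc /= in h4 *; lra.
Qed.


Lemma sec_eq x T a : 0 <= x -> ysection (E1 x T) a = xsection (E2 x T) a.
Proof.
move=> x0; apply/seteqP; rewrite /xsection /ysection /=; split => b /=;
  rewrite !in_setE /E1 /E2 /S3 /oc /=.
- by move=> [h1 [[h2 h3] [h4 h5]]]; repeat split; lra.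
- by move=> [[h1 h2] [h3 [h4 h5]]]; repeat split; lra.
Qed.

Lemma xsec_in x T a : 0 <= x -> -1 < a <= x / 2 ->
  xsection (E2 x T) a = oc (x - a) (x + T - a).
Proof.
move=> x0 /andP[a1 a2]; apply/seteqP; rewrite /xsection /=; split => b /=;
  rewrite !in_setE /E2 /S3 /oc /=.
- by move=> [_ [h1 [h2 h3]]]; split; lra.
- by move=> [h1 h2]; repeat split; lra.
Qed.

Lemma xsec_out x T a : ~~ (-1 < a <= x / 2) -> xsection (E2 x T) a = set0.
Proof.
move=> ha; apply/seteqP; rewrite /xsection /=; split => b //=.
rewrite !in_setE /E2 /S3 /oc /= => -[[h1 h2] _].
by move: ha; rewrite h1 h2.
Qed.

Lemma psi_in x T a : 0 <= x -> 0 <= T -> -1 < a <= x / 2 ->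
  mu (xsection (E2 x T) a) = (G (x + T - a) - G (x - a))%:E.
Proof. by move=> x0 T0 ha; rewrite xsec_in // mu_oc' //; lra. Qed.

Lemma psi_out x T a : ~~ (-1 < a <= x / 2) -> mu (xsection (E2 x T) a) = 0%E.
Proof. by move=> ha; rewrite xsec_out // measure0. Qed.

Lemma piE1 x T : 0 <= x ->
  pi (E1 x T) = (\int[mu]_a mu (xsection (E2 x T) a))%E.
Proof.
move=> x0; rewrite pi_ysec; last exact: mE1.
by apply: eq_integral => a _; rewrite sec_eq.
Qed.

Lemma piE2 x T : pi (E2 x T) = (\int[mu]_a mu (xsection (E2 x T) a))%E.
Proof. by []. Qed.


Lemma mpsi (x T : R) : measurable_fun setT (fun a => mu (xsection (E2 x T) a)).
Proof. exact: (measurable_fun_xsection mu (mE2 x T)). Qed.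

Lemma mind_c (A : set R) (k : R) : measurable A ->
  measurable_fun setT (fun a : measurableTypeR R => (k * \1_A a)%:E).
Proof.
move=> mA; apply/measurable_EFinP; apply: measurable_funM.
  exact: measurable_cst.
exact: measurable_indic.
Qed.

Lemma int_ind_c (A : set R) (k : R) : measurable A -> 0 <= k ->
  (\int[mu]_a (k * \1_A a)%:E = k%:E * mu A)%E.
Proof.
move=> mA k0.
rewrite (@integralZl_indic _ _ _ mu setT measurableT (fun _ => A)) //.
  by rewrite integral_indic // setIT.
by move=> /=; rewrite ltNge k0.
Qed.


Lemma Gm_ge0 z : 0 <= G z.
Proof.
have [z0|z0] := ltP z 0; first by rewrite Gneg.
by rewrite -(Gneg (x := -1)) ?Gnd //; lra.
Qed.

Lemma indic_oc (a b z : R) : \1_(oc a b) z = (if (a < z) && (z <= b) then 1 else 0 : R).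
Proof.
rewrite indicE; case: ifPn => H.
  by rewrite mem_set //; move/andP: H.
rewrite memNset //= /oc => -[h1 h2]; move/negP: H; apply; apply/andP; split; assumption.
Qed.

Lemma J_low x T K lo : 0 <= x -> 0 <= T -> 0 <= K <= x / 2 -> 0 <= lo ->
  (forall a, -1 < a <= K -> lo <= G (x + T - a) - G (x - a)) ->
  ((lo * G K)%:E <= \int[mu]_a mu (xsection (E2 x T) a))%E.
Proof.
move=> x0 T0 /andP[K0 Kx] lo0 Hlo.
apply: (@le_trans _ _ (\int[mu]_a (lo * \1_(oc (-1) K) a)%:E)%E).
  rewrite int_ind_c //; last exact: measurable_oc.
  by rewrite mu_oc' ?(Gneg (x := -1)) ?subr0 //; lra.
apply: ge0_le_integral => //.
- by move=> a _; rewrite lee_fin mulr_ge0 // indic_ge0.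
- exact: (@mind_c (oc (-1) K) lo (measurable_oc _ _)).
- exact: mpsi.
move=> a Ha; rewrite indic_oc.
case: ifPn => ha.
  rewrite mulr1 psi_in //; last by move: ha => /andP[h1 h2]; apply/andP; split; lra.
  by rewrite lee_fin; apply: Hlo.
by rewrite mulr0; exact: measure_ge0.
Qed.


Lemma J_up x T K hi1 hi2 : 0 <= x -> 0 <= T -> 0 <= K <= x / 2 -> 0 <= hi1 -> 0 <= hi2 ->
  (forall a, -1 < a <= K -> G (x + T - a) - G (x - a) <= hi1) ->
  (forall a, K < a <= x / 2 -> G (x + T - a) - G (x - a) <= hi2) ->
  (\int[mu]_a mu (xsection (E2 x T) a) <= (hi1 * G K + hi2 * (G (x / 2) - G K))%:E)%E.
Proof.
move=> x0 T0 /andP[K0 Kx] h10 h20 H1 H2.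
apply: (@le_trans _ _ (\int[mu]_a ((hi1 * \1_(oc (-1) K) a)%:E + (hi2 * \1_(oc K (x / 2)) a)%:E))%E).
  apply: ge0_le_integral => //.
  - exact: mpsi.
  - apply: emeasurable_funD.
    + exact: (@mind_c (oc (-1) K) hi1 (measurable_oc _ _)).
    + exact: (@mind_c (oc K (x / 2)) hi2 (measurable_oc _ _)).
  move=> a Ha; rewrite !indic_oc.
  have [ha|ha] := boolP ((-1 < a) && (a <= x / 2)); last first.
    rewrite psi_out //; apply: adde_ge0; rewrite lee_fin; apply: mulr_ge0 => //;
      by case: ifP.
  rewrite psi_in //.
  case/andP: ha => ha1 ha2.
  have [hk|hk] := leP a K.
    rewrite ha1 /= mulr1 mulr0 adde0 lee_fin.
    by apply: H1; rewrite ha1 hk.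
  rewrite ha2 /= andbF mulr0 mulr1 add0e lee_fin.
  by apply: H2; rewrite hk ha2.
rewrite ge0_integralD //.
- rewrite !int_ind_c //; [|exact: measurable_oc|exact: measurable_oc].
  rewrite !mu_oc' //; last by lra.
  by rewrite (Gneg (x := -1)) ?subr0 // -EFinM -EFinM -EFinD; lra.
- by move=> a Ha; rewrite lee_fin mulr_ge0 // indic_ge0.
- exact: (@mind_c (oc (-1) K) hi1 (measurable_oc _ _)).
- by move=> a Ha; rewrite lee_fin mulr_ge0 // indic_ge0.
- exact: (@mind_c (oc K (x / 2)) hi2 (measurable_oc _ _)).
Qed.


Lemma E3_bound x T : 0 <= T -> (pi (E3 x T) <= ((G (x / 2 + T) - G (x / 2)) ^+ 2)%:E)%E.
Proof.
move=> T0.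
apply: (@le_trans _ _ (pi (oc (x / 2) (x / 2 + T) `*` oc (x / 2) (x / 2 + T)))).
  apply: le_measure; rewrite ?inE.
  - exact: mE3.
  - by apply: measurableX; exact: measurable_oc.
  move=> [a b]; rewrite /E3 /S3 /oc /= => -[h1 [h2 [h3 h4]]].
  by repeat split; lra.
rewrite pi_rect; [|exact: measurable_oc|exact: measurable_oc].
by rewrite mu_oc' ?expr2 ?EFinM //; lra.
Qed.

Lemma sub_fin (A : set T2) y : measurable A -> A `<=` Z y -> pi A \is a fin_num.
Proof.
move=> mA AZ; rewrite ge0_fin_numE ?measure_ge0 //.
apply: (@le_lt_trans _ _ (pi (Z y))).
  by apply: le_measure; rewrite ?inE //; exact: measurable_Z.
by rewrite -ge0_fin_numE ?measure_ge0 ?piZ_fin.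
Qed.

Lemma final_bounds x T K lo hi1 hi2 : 0 <= x -> 0 <= T -> 0 <= K <= x / 2 ->
  0 <= lo -> 0 <= hi1 -> 0 <= hi2 ->
  (forall a, -1 < a <= K -> lo <= G (x + T - a) - G (x - a) <= hi1) ->
  (forall a, K < a <= x / 2 -> G (x + T - a) - G (x - a) <= hi2) ->
  2 * lo * G K <= fine (pi (Z (x + T))) - fine (pi (Z x)) <=
   2 * (hi1 * G K + hi2 * (G (x / 2) - G K)) + (G (x / 2 + T) - G (x / 2)) ^+ 2.
Proof.
move=> x0 T0 Kx lo0 h10 h20 H1 H2.
have fW : pi (Wset x T) \is a fin_num.
  apply: (sub_fin (y := x + T)); first exact: mW.
  by move=> [a b]; rewrite /Wset /Z /S3 /oc /= => -[h1 [h2 [h3 h4]]]; repeat split.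
have f1 : pi (E1 x T) \is a fin_num.
  apply: (sub_fin (y := x + T)); first exact: mE1.
  by move=> [a b]; rewrite /E1 /Z /S3 /oc /= => -[h1 [[h2 h2'] [h3 h4]]]; repeat split.
have f2 : pi (E2 x T) \is a fin_num.
  apply: (sub_fin (y := x + T)); first exact: mE2.
  move=> [a b]; rewrite /E2 /Z /S3 /oc /= => -[[h1 h1'] [h2 [h3 h4]]]; repeat split => //.
  lra.
have f3 : pi (E3 x T) \is a fin_num.
  apply: (sub_fin (y := x + T)); first exact: mE3.
  move=> [a b]; rewrite /E3 /Z /S3 /oc /= => -[h1 [h2 [h3 h4]]]; repeat split => //; lra.
have eq1 : fine (pi (Z (x + T))) - fine (pi (Z x)) =
    fine (pi (E1 x T)) + fine (pi (E2 x T)) + fine (pi (E3 x T)).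
  rewrite Zsplit // Wsplit //.
  have fZ := piZ_fin x.
  have f12 : (pi (E1 x T) + pi (E2 x T))%E \is a fin_num by rewrite fin_numD f1 f2.
  have f123 : (pi (E1 x T) + pi (E2 x T) + pi (E3 x T))%E \is a fin_num by rewrite fin_numD f12 f3.
  rewrite (fineD fZ f123) (fineD f12 f3) (fineD f1 f2); ring.
have e12 : fine (pi (E1 x T)) = fine (pi (E2 x T)) by rewrite piE1 // piE2.
have /andP[lo1 up1] : (lo * G K <= fine (pi (E2 x T)) <= hi1 * G K + hi2 * (G (x / 2) - G K)).
  apply/andP; split.
    rewrite -lee_fin fineK // piE2; apply: J_low => //.
    by move=> a ha; have /andP[] := H1 a ha.
  rewrite -lee_fin fineK // piE2; apply: J_up => //.
  by move=> a ha; have /andP[] := H1 a ha.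
have /andP[lo3 up3] : 0 <= fine (pi (E3 x T)) <= (G (x / 2 + T) - G (x / 2)) ^+ 2.
  apply/andP; split.
    by rewrite fine_ge0 // measure_ge0.
  by rewrite -lee_fin fineK // E3_bound.
rewrite eq1 e12; move: lo1 up1 lo3 up3; clear fW f1 f2 f3 eq1 e12 H1 H2.
move: (fine (pi (E2 x T))) (fine (pi (E3 x T))) => u v.
by move=> *; apply/andP; split; lra.
Qed.


Lemma conv_sum_csum y n : conv_sum G y n = csum y n.
Proof.
rewrite /conv_sum sum_f_R0_big; apply: eq_bigr => k _.
rewrite /csum /tt /hh !INRE IZRm1 IZR2.
reflexivity.
Qed.

Definition LL (y : R) : R := fine (pi (Z y)).

Lemma conv_cdf_LL y : 0 <= y -> conv_cdf G y = LL y.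
Proof.
move=> y0.
have cv : Un_cv (conv_sum G y) (LL y).
  move=> e /RltP e0.
  have [N HN] := csum_cvg y0 e0.
  exists N => n /ssrnat.leP Nn; rewrite conv_sum_csum /R_dist; apply/RltP; exact: HN.
rewrite /conv_cdf /lim_seq.
have cv2 := cv.
apply: (UL_sequence (conv_sum G y)) cv.
apply: (@epsilon_spec R _ (fun l => Un_cv (conv_sum G y) l)).
by exists (LL y); exact: cv2.
Qed.

End Core.


Lemma rc_bridge (G : R -> R) :
  (forall x eps, Rlt 0 eps -> exists d, Rlt 0 d /\ forall y, Rle x y /\ Rlt y (Rplus x d) ->
     Rlt (Rabs (Rminus (G y) (G x))) eps) -> right_continuous G.
Proof.
move=> rc x; apply/cvgrPdist_lt => e /RltP e0.
have [d [/RltP d0 Hd]] := rc x e e0.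
near=> y.
have xy : x < y by near: y; exact: nbhs_right_gt.
have yd : y < x + d by near: y; apply: nbhs_right_lt; rewrite ltrDl.
rewrite distrC; apply/RltP; apply: Hd; split; [apply/RleP; exact: ltW|exact/RltP].
Unshelve. all: end_near.
Qed.

Lemma nd_bridge (G : R -> R) : (forall x y, Rle x y -> Rle (G x) (G y)) -> nondecreasing G.
Proof. by move=> mono a b /RleP ab; apply/RleP; exact: mono. Qed.

Lemma neg_bridge (G : R -> R) : (forall x, Rlt x 0 -> G x = 0) -> forall x, x < 0 -> G x = 0.
Proof. by move=> neg x /RltP; exact: neg. Qed.

Section Bridge.
Local Open Scope R_scope.
Lemma bridge (G : R -> R) (Gnd : nondecreasing G) (Grc : right_continuous G)
  (Gneg : forall x, (x < 0)%R -> G x = 0%R) (T : R) : 0 <= T ->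
  forall x K lo hi1 hi2, 0 <= x -> 0 <= K <= x / 2 -> 0 <= lo -> 0 <= hi1 -> 0 <= hi2 ->
     (forall a, -1 < a <= K -> lo <= Fint G T (x - a) <= hi1) ->
     (forall a, K < a <= x / 2 -> Fint G T (x - a) <= hi2) ->
     2 * lo * G K <= LL Gnd Grc (x + T) - LL Gnd Grc x <=
       2 * (hi1 * G K + hi2 * (G (x / 2) - G K)) + Fint G T (x / 2) ^ 2.
Proof.
move=> /RleP T0 x K lo hi1 hi2 /RleP x0 [/RleP K0 /RleP Kx] /RleP lo0 /RleP h10 /RleP h20 H1 H2.
rewrite IZR2 in Kx.
have Kx' : (0 <= K <= x / 2)%R by rewrite K0 Kx.
have H1' : forall a, (-1 < a <= K)%R -> (lo <= G (x + T - a) - G (x - a) <= hi1)%R.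
  move=> a /andP[/RltP ha1 /RleP ha2].
  rewrite -IZRm1 in ha1.
  have [/RleP h1 /RleP h2] := H1 a (conj ha1 ha2).
  have E : (x + T - a = x - a + T)%R by ring.
  by rewrite E h1 h2.
have H2' : forall a, (K < a <= x / 2)%R -> (G (x + T - a) - G (x - a) <= hi2)%R.
  move=> a /andP[/RltP ha1 /RleP ha2].
  rewrite -IZR2 in ha2.
  have /RleP h := H2 a (conj ha1 ha2).
  have E : (x + T - a = x - a + T)%R by ring.
  by rewrite E.
have := final_bounds Gnd Grc Gneg x0 T0 Kx' lo0 h10 h20 H1' H2'.
move=> /andP[/RleP b1 /RleP b2].
rewrite /Fint IZR2 RpowE; split.
  exact: b1.
have E : (x / 2 + T = x / 2 + T)%R by [].
exact: b2.
Qed.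
End Bridge.

Open Scope R_scope.
Bind Scope R_scope with R.

Theorem proposition9 (T : R) (G : R -> R) :
  0 < T ->
  is_distr0 G ->
  in_L_Delta T G ->
  (exists c x0, 0 < c /\
     forall x t, x0 < x -> 0 < t <= x -> Fint G T (x + t) >= c * Fint G T x) ->
  in_S_Delta T G.
Proof.
move=> T0 HG HL Hc.
have HG' := HG; case: HG' => [mono [rc [neg lim]]].
have Gnd := nd_bridge mono.
have Grc := rc_bridge rc.
have Gneg := neg_bridge neg.
split.
  move=> M; have [[x1 Hpos] _] := HL.
  have h1 := Hpos (Rmax M x1) (Rmax_r M x1).
  have h2 := mono M (Rmax M x1) (Rmax_l M x1).
  have h3 := G_le1 G HG (Rmax M x1 + T).
  rewrite /Fint in h1.
  Lra.lra.
split; first exact: HL.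
move=> eps eps0.
have [M HM] := asym T G (LL Gnd Grc) T0 HG HL Hc (@bridge G Gnd Grc Gneg T (Rlt_le _ _ T0)) eps eps0.
exists (Rmax M 0) => x Hx.
have xM : M <= x by apply: Rle_trans (Rmax_l M 0) Hx.
have x0 : 0 <= x by apply: Rle_trans (Rmax_r M 0) Hx.
have xT : 0 <= x + T by Lra.lra.
rewrite /ConvInt (conv_cdf_LL Gnd Grc Gneg (y := x + T)); last exact/RleP.
rewrite (conv_cdf_LL Gnd Grc Gneg (y := x)); last exact/RleP.
exact: HM.
Qed.
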